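(* For every locally consistent maximal P2P system $PS$, the set $MaxWM(PS)$ of maximal weak models of $PS$ is nonempty.
   Context: Peer atoms: a peer identifier is a positive integer; a peer atom is $i\!:\!p(t_1,\dots,t_k)$ with $i$ a peer identifier, $p$ a predicate and $t_j$ terms; $i\!:\!p$ is a peer predicate. A literal is an atom $A$ or its negation-as-failure $not\ A$. Built-in atoms are $X\,\theta\,Y$ with $\theta\in\{<,>,\le,\ge,=,\neq\}$. Rules (all safe): a standard rule $H\leftarrow \mathcal B$ with $H$ a peer atom and $\mathcal B$ a conjunction of peer literals and built-ins; an integrity constraint $\leftarrow \mathcal B$; a maximal mapping rule $i\!:\!h(X) \leftharpoonup j\!:\!(p_1(X_1),\dots,p_m(X_m),\varphi)$ with $i\neq j$; a minimal mapping rule, identical but written with $\leftharpoondown$. A peer $P_i=\langle D_i,LP_i,MP_i,IC_i\rangle$ consists of a finite set $D_i$ of ground atoms with identifier $i$, a finite set $LP_i$ of standard rules all of whose atoms have identifier $i$, a finite set $MP_i$ of mapping rules with head identifier $i$, and a finite set $IC_i$ of integrity constraints over atoms with identifier $i$. A P2P system is a set $PS=\{P_1,\dots,P_n\}$ of peers in which every source identifier of a mapping rule lies in $[1..n]$; $D,LP,MP,IC$ are the unions of the components, and $PS$ is identified with $D\cup LP\cup MP\cup IC$. A maximal P2P system is one all of whose mapping rules are maximal. A predicate is derived if it heads a standard rule, a mapping predicate if it heads a mapping rule, base otherwise; each predicate has exactly one type and each mapping predicate heads exactly one mapping rule. Semantics: an interpretation is a set of ground peer atoms; $A$ true iff $A\in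 M$, $not\ A$ true iff $A\notin M$; a standard rule is satisfied iff its body is false or its head true; a constraint iff its body is false. $MM(\Pi)$ is the set of inclusion-minimal models of a program $\Pi$. The stable models $SM(\Pi)$ of a program $\Pi$ are the interpretations $M$ that are the minimal model of the Gelfond–Lifschitz reduct $\Pi^M$ (remove from $ground(\Pi)$ rules containing $not\ A$ with $A\in M$, then delete all negative literals). A peer $P_i$ is locally consistent if $SM(D_i\cup LP_i\cup IC_i)\neq\emptyset$; a P2P system is locally consistent if all its peers are. $St(r)$ turns a mapping rule with head $H$ and body $\mathcal B$ into $H\leftarrow\mathcal B$. An interpretation $M$ is a weak model of $PS$ if $\{M\}=MM(St(PS^M))$, where $PS^M$ is obtained from $ground(PS)$ by removing every rule whose body contains $not\ A$ with $A\in M$, deleting negative literals from the remaining rules, and removing every ground mapping rule whose head is not in $M$. $M[MP]$ is the set of atoms of $M$ with a mapping predicate. For weak models, $M\sqsupseteq_{Max}N$ iff $M[MP]\supseteq N[MP]$, and $M\sqsupset_{Max}N$ iff $M\sqsupseteq_{Max}N$ and not $N\sqsupseteq_{Max}M$. A weak model $M$ is maximal if there is no weak model $N$ with $N\sqsupset_{Max}M$; $MaxWM(PS)$ is the set of maximal weak models. *)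

(* Defs.v *)
From Stdlib Require Import List Arith.
Import ListNotations.

Inductive term := TVar (x : nat) | TConst (c : nat).

Record atom := mkAtom { a_id : nat; a_pred : nat; a_args : list term }.

Inductive cmp := CLt | CGt | CLe | CGe | CEq | CNe.

Record builtin := mkBuiltin { b_op : cmp; b_l : term; b_r : term }.

Inductive literal := LPos (a : atom) | LNeg (a : atom) | LBuiltin (b : builtin).

Inductive mkind := MaxMap | MinMap.

(* Rules:
   RStd h B               :  h <- B
   RIC B                  :  <- B
   RMap k h j body phi    :  h <-(max/min)- j:(p_1(X_1),...,p_m(X_m), phi)
      where body = [(p_1,X_1);...;(p_m,X_m)] and phi a conjunction of built-ins *)
Inductive rule :=
  | RStd (h : atom) (body : list literal)
  | RIC (body : list literal)
  | RMap (k : mkind) (h : atom) (j : nat) (body : list (nat * list term))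
         (phi : list builtin).

Record gatom := mkGAtom { g_id : nat; g_pred : nat; g_args : list nat }.

Record peer := mkPeer {
  pD : list gatom; pLP : list rule; pMP : list rule; pIC : list rule }.

(* A P2P system: the list [P_1; ...; P_n] (peer at position k has id k+1). *)
Definition p2p := list peer.

Record program := mkProgram { facts : list gatom; rules : list rule }.

Definition prog_of (PS : p2p) : program :=
  mkProgram (flat_map pD PS)
            (flat_map (fun P => pLP P ++ pMP P ++ pIC P) PS).

Definition vars_term (t : term) : list nat :=
  match t with TVar x => [x] | TConst _ => [] end.
Definition consts_term (t : term) : list nat :=
  match t with TVar _ => [] | TConst c => [c] end.
Definition vars_atom (a : atom) : list nat := flat_map vars_term (a_args a).
Definition consts_atom (a : atom) : list nat := flat_map consts_term (a_args a).
Definition vars_builtin (b : builtin) : list nat :=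
  vars_term (b_l b) ++ vars_term (b_r b).
Definition consts_builtin (b : builtin) : list nat :=
  consts_term (b_l b) ++ consts_term (b_r b).
Definition vars_lit (l : literal) : list nat :=
  match l with LPos a | LNeg a => vars_atom a | LBuiltin b => vars_builtin b end.
Definition consts_lit (l : literal) : list nat :=
  match l with LPos a | LNeg a => consts_atom a | LBuiltin b => consts_builtin b end.
Definition pos_vars (B : list literal) : list nat :=
  flat_map (fun l => match l with LPos a => vars_atom a | _ => [] end) B.

Definition vars_rule (r : rule) : list nat :=
  match r with
  | RStd h B => vars_atom h ++ flat_map vars_lit B
  | RIC B => flat_map vars_lit B
  | RMap _ h _ body phi =>
      vars_atom h ++ flat_map (fun pa => flat_map vars_term (snd pa)) body
                  ++ flat_map vars_builtin phi
  end.

Definition consts_rule (r : rule) : list nat :=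
  match r with
  | RStd h B => consts_atom h ++ flat_map consts_lit B
  | RIC B => flat_map consts_lit B
  | RMap _ h _ body phi =>
      consts_atom h ++ flat_map (fun pa => flat_map consts_term (snd pa)) body
                    ++ flat_map consts_builtin phi
  end.

Definition safe (r : rule) : Prop :=
  match r with
  | RStd _ B | RIC B => forall x, In x (vars_rule r) -> In x (pos_vars B)
  | RMap _ _ _ body _ =>
      forall x, In x (vars_rule r) ->
        In x (flat_map (fun pa => flat_map vars_term (snd pa)) body)
  end.

Definition HU (P : program) (c : nat) : Prop :=
  In c (flat_map g_args (facts P)) \/ In c (flat_map consts_rule (rules P)).

Definition subst := nat -> nat.

Definition inst_term (s : subst) (t : term) : nat :=
  match t with TVar x => s x | TConst c => c end.
Definition inst_atom (s : subst) (a : atom) : gatom :=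
  mkGAtom (a_id a) (a_pred a) (map (inst_term s) (a_args a)).

Definition eval_cmp (o : cmp) (x y : nat) : bool :=
  match o with
  | CLt => Nat.ltb x y | CGt => Nat.ltb y x
  | CLe => Nat.leb x y | CGe => Nat.leb y x
  | CEq => Nat.eqb x y | CNe => negb (Nat.eqb x y)
  end.
Definition eval_builtin (s : subst) (b : builtin) : bool :=
  eval_cmp (b_op b) (inst_term s (b_l b)) (inst_term s (b_r b)).

(* A ground rule: optional head (None = constraint), positive body atoms,
   negated body atoms, truth value of the (ground) built-ins, and a flag
   telling whether it is (an instance of) a mapping rule. *)
Record grule := mkGRule {
  gr_head : option gatom; gr_pos : list gatom; gr_neg : list gatom;
  gr_bi : bool; gr_map : bool }.

Definition pos_atoms (B : list literal) : list atom :=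
  flat_map (fun l => match l with LPos a => [a] | _ => [] end) B.
Definition neg_atoms (B : list literal) : list atom :=
  flat_map (fun l => match l with LNeg a => [a] | _ => [] end) B.
Definition bi_atoms (B : list literal) : list builtin :=
  flat_map (fun l => match l with LBuiltin b => [b] | _ => [] end) B.

Definition inst_rule (s : subst) (r : rule) : grule :=
  match r with
  | RStd h B =>
      mkGRule (Some (inst_atom s h)) (map (inst_atom s) (pos_atoms B))
              (map (inst_atom s) (neg_atoms B))
              (forallb (eval_builtin s) (bi_atoms B)) false
  | RIC B =>
      mkGRule None (map (inst_atom s) (pos_atoms B))
              (map (inst_atom s) (neg_atoms B))
              (forallb (eval_builtin s) (bi_atoms B)) false
  | RMap _ h j body phi =>
      mkGRule (Some (inst_atom s h))
              (map (fun pa => mkGAtom j (fst pa) (map (inst_term s) (snd pa))) body)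
              [] (forallb (eval_builtin s) phi) true
  end.

Definition gprogram := grule -> Prop.

Definition ground (P : program) : gprogram := fun g =>
  (exists a, In a (facts P) /\ g = mkGRule (Some a) [] [] true false) \/
  (exists r s, In r (rules P) /\
     (forall x, In x (vars_rule r) -> HU P (s x)) /\ g = inst_rule s r).

Definition interp := gatom -> Prop.

Definition body_true (M : interp) (g : grule) : Prop :=
  Forall M (gr_pos g) /\ Forall (fun a => ~ M a) (gr_neg g) /\ gr_bi g = true.

Definition satisfies (M : interp) (g : grule) : Prop :=
  body_true M g ->
  match gr_head g with Some a => M a | None => False end.

Definition is_model (GP : gprogram) (M : interp) : Prop :=
  forall g, GP g -> satisfies M g.

Definition subseteq (N M : interp) : Prop := forall a, N a -> M a.
Definition set_eq (N M : interp) : Prop := forall a, N a <-> M a.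

Definition MM (GP : gprogram) (M : interp) : Prop :=
  is_model GP M /\ forall N, is_model GP N -> subseteq N M -> subseteq M N.

Definition drop_neg (g : grule) : grule :=
  mkGRule (gr_head g) (gr_pos g) [] (gr_bi g) (gr_map g).

Definition gl_reduct (GP : gprogram) (M : interp) : gprogram := fun g' =>
  exists g, GP g /\ Forall (fun a => ~ M a) (gr_neg g) /\ g' = drop_neg g.

Definition SM (P : program) (M : interp) : Prop :=
  MM (gl_reduct (ground P) M) M.

Definition locally_consistent_peer (P : peer) : Prop :=
  exists M, SM (mkProgram (pD P) (pLP P ++ pIC P)) M.

Definition locally_consistent (PS : p2p) : Prop :=
  forall P, In P PS -> locally_consistent_peer P.

Definition ps_reduct (GP : gprogram) (M : interp) : gprogram := fun g' =>
  exists g, GP g /\ Forall (fun a => ~ M a) (gr_neg g) /\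
    (gr_map g = true -> match gr_head g with Some a => M a | None => False end) /\
    g' = drop_neg g.

Definition St (GP : gprogram) : gprogram := fun g' =>
  exists g, GP g /\ g' = mkGRule (gr_head g) (gr_pos g) (gr_neg g) (gr_bi g) false.

(* Weak models: {M} = MM(St(PS^M)). *)
Definition weak_model (PS : p2p) (M : interp) : Prop :=
  MM (St (ps_reduct (ground (prog_of PS)) M)) M /\
  forall N, MM (St (ps_reduct (ground (prog_of PS)) M)) N -> set_eq N M.

Definition is_mapping_pred (PS : p2p) (i p : nat) : Prop :=
  exists k h j body phi, In (RMap k h j body phi) (rules (prog_of PS)) /\
    a_id h = i /\ a_pred h = p.

Definition restrict_MP (PS : p2p) (M : interp) : interp := fun a =>
  M a /\ is_mapping_pred PS (g_id a) (g_pred a).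

Definition geMax (PS : p2p) (M N : interp) : Prop :=
  subseteq (restrict_MP PS N) (restrict_MP PS M).
Definition gtMax (PS : p2p) (M N : interp) : Prop :=
  geMax PS M N /\ ~ geMax PS N M.

Definition max_weak_model (PS : p2p) (M : interp) : Prop :=
  weak_model PS M /\ ~ exists N, weak_model PS N /\ gtMax PS N M.

Definition lit_ids_ok (i : nat) (l : literal) : Prop :=
  match l with LPos a | LNeg a => a_id a = i | LBuiltin _ => True end.

Definition std_rule_ok (i : nat) (r : rule) : Prop :=
  exists h B, r = RStd h B /\ a_id h = i /\ Forall (lit_ids_ok i) B /\ safe r.

Definition ic_ok (i : nat) (r : rule) : Prop :=
  exists B, r = RIC B /\ Forall (lit_ids_ok i) B /\ safe r.

Definition map_rule_ok (i n : nat) (r : rule) : Prop :=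
  exists k h j body phi, r = RMap k h j body phi /\ a_id h = i /\
    1 <= j <= n /\ i <> j /\ safe r.

Definition peer_ok (i n : nat) (P : peer) : Prop :=
  Forall (fun a => g_id a = i) (pD P) /\
  Forall (std_rule_ok i) (pLP P) /\
  Forall (map_rule_ok i n) (pMP P) /\
  Forall (ic_ok i) (pIC P).

Definition heads_std (PS : p2p) (i p : nat) : Prop :=
  exists h B, In (RStd h B) (rules (prog_of PS)) /\ a_id h = i /\ a_pred h = p.

Definition p2p_system (PS : p2p) : Prop :=
  (forall k P, nth_error PS k = Some P -> peer_ok (S k) (length PS) P) /\
  (forall i p, ~ (heads_std PS i p /\ is_mapping_pred PS i p)) /\
  (forall k1 h1 j1 b1 f1 k2 h2 j2 b2 f2,
     In (RMap k1 h1 j1 b1 f1) (rules (prog_of PS)) ->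
     In (RMap k2 h2 j2 b2 f2) (rules (prog_of PS)) ->
     a_id h1 = a_id h2 -> a_pred h1 = a_pred h2 ->
     RMap k1 h1 j1 b1 f1 = RMap k2 h2 j2 b2 f2).

Definition maximal_p2p (PS : p2p) : Prop :=
  forall k h j body phi, In (RMap k h j body phi) (rules (prog_of PS)) -> k = MaxMap.

(* Main.v *)
Require Import Defs.
From Stdlib Require Import List Arith Lia Classical ClassicalEpsilon.
Import ListNotations.

Lemma body_mono (A B : interp) g : subseteq A B -> gr_neg g = [] -> body_true A g -> body_true B g.
Proof. intros HAB Hn [Hp [_ Hb]]. split; [|split].
  - exact (Forall_impl _ HAB Hp). - rewrite Hn; constructor. - exact Hb. Qed.

Lemma MM_support (GP : gprogram) (M : interp) :
  (forall g, GP g -> gr_neg g = []) ->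
  MM GP M -> forall a, M a -> exists g, GP g /\ gr_head g = Some a.
Proof.
  intros Hneg [Hm Hmin] a Ha.
  set (N := fun b => M b /\ exists g, GP g /\ gr_head g = Some b).
  assert (HN : is_model GP N).
  { intros g Hg Hb.
    pose proof (Hm g Hg (body_mono N M g (fun b H => proj1 H) (Hneg g Hg) Hb)) as H.
    destruct (gr_head g) eqn:E; [split; [exact H| exists g; auto] | exact H]. }
  exact (proj2 (Hmin N HN (fun b H => proj1 H) a Ha)).
Qed.

Definition locp (P : peer) : program := mkProgram (pD P) (pLP P ++ pIC P).
Definition Mi (P : peer) : interp :=
  epsilon (inhabits (fun _ : gatom => False)) (fun M => SM (locp P) M).
Lemma Mi_SM P : locally_consistent_peer P -> SM (locp P) (Mi P).
Proof. intros [M HM]. unfold Mi.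
  apply (epsilon_spec (inhabits (fun _ : gatom => False)) (fun M => SM (locp P) M)).
  exists M; exact HM. Qed.

Lemma inst_args_HU (P : program) r s h :
  In r (rules P) -> (forall x, In x (vars_rule r) -> HU P (s x)) ->
  incl (vars_atom h) (vars_rule r) -> incl (consts_atom h) (consts_rule r) ->
  forall c, In c (g_args (inst_atom s h)) -> HU P c.
Proof.
  intros Hr HHU Hv Hc c Hin. simpl in Hin. apply in_map_iff in Hin as [t [<- Ht]].
  destruct t as [x|c]; simpl.
  - apply HHU, Hv. unfold vars_atom. apply in_flat_map. exists (TVar x). simpl; auto.
  - right. apply in_flat_map. exists r. split; auto. apply Hc. unfold consts_atom.
    apply in_flat_map. exists (TConst c). simpl; auto.
Qed.

Lemma neg_ids i s B a : Forall (lit_ids_ok i) B -> In a (map (inst_atom s) (neg_atoms B)) -> g_id a = i.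
Proof.
  intros HB Ha. apply in_map_iff in Ha as [a0 [<- Ha0]]. unfold neg_atoms in Ha0.
  apply in_flat_map in Ha0 as [l [Hl Ha0]]. rewrite Forall_forall in HB.
  specialize (HB l Hl). destruct l; simpl in *; try contradiction.
  destruct Ha0 as [<-|[]]. exact HB.
Qed.

Lemma pos_ids i s B a : Forall (lit_ids_ok i) B -> In a (map (inst_atom s) (pos_atoms B)) -> g_id a = i.
Proof.
  intros HB Ha. apply in_map_iff in Ha as [a0 [<- Ha0]]. unfold pos_atoms in Ha0.
  apply in_flat_map in Ha0 as [l [Hl Ha0]]. rewrite Forall_forall in HB.
  specialize (HB l Hl). destruct l; simpl in *; try contradiction.
  destruct Ha0 as [<-|[]]. exact HB.
Qed.

Lemma pos_vars_atom B x : In x (pos_vars B) -> exists a, In a (pos_atoms B) /\ In x (vars_atom a).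
Proof.
  unfold pos_vars, pos_atoms. intros H. apply in_flat_map in H as [l [Hl Hx]].
  destruct l; try contradiction. exists a. split; auto.
  apply in_flat_map. exists (LPos a). simpl; auto.
Qed.

Lemma var_in_args s a x : In x (vars_atom a) -> In (s x) (g_args (inst_atom s a)).
Proof.
  unfold vars_atom. intros H. apply in_flat_map in H as [t [Ht Hx]].
  destruct t; simpl in Hx; [|contradiction]. destruct Hx as [<-|[]].
  simpl. apply in_map_iff. exists (TVar x0). auto.
Qed.

Lemma HU_mono P Q c : incl (facts P) (facts Q) -> incl (rules P) (rules Q) -> HU P c -> HU Q c.
Proof.
  intros Hf Hr [H|H]; apply in_flat_map in H as [y [Hy Hc]]; [left|right];
  apply in_flat_map; exists y; auto.
Qed.

Lemma ground_mono P Q g : incl (facts P) (facts Q) -> incl (rules P) (rules Q) -> ground P g -> ground Q g.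
Proof.
  intros Hf Hr [[a [Ha ->]]|[r [s [Hin [HHU ->]]]]].
  - left. exists a. auto.
  - right. exists r, s. repeat split; auto. intros x Hx. eapply HU_mono; eauto.
Qed.

Lemma locp_incl PS P : In P PS -> incl (facts (locp P)) (facts (prog_of PS)) /\
  incl (rules (locp P)) (rules (prog_of PS)).
Proof.
  intros HP. split; intros x Hx; simpl in *; apply in_flat_map; exists P; split; auto.
  apply in_app_iff in Hx as [H|H]; apply in_app_iff; [left|right]; auto.
  apply in_app_iff; right; auto.
Qed.

Lemma loc_rule_info i n P r : peer_ok i n P -> In r (pLP P ++ pIC P) ->
  exists B, Forall (lit_ids_ok i) B /\ (forall x, In x (vars_rule r) -> In x (pos_vars B)) /\
   (forall s, gr_pos (inst_rule s r) = map (inst_atom s) (pos_atoms B) /\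
              gr_neg (inst_rule s r) = map (inst_atom s) (neg_atoms B) /\
              gr_map (inst_rule s r) = false) /\
   ((exists h, r = RStd h B /\ a_id h = i) \/ r = RIC B).
Proof.
  intros [_ [HLP [_ HIC]]] Hr. rewrite Forall_forall in HLP, HIC.
  apply in_app_iff in Hr as [Hr|Hr].
  - destruct (HLP r Hr) as [h [B [-> [Hh [HB Hs]]]]]. exists B. repeat split; auto.
    left; eauto.
  - destruct (HIC r Hr) as [B [-> [HB Hs]]]. exists B. repeat split; auto.
Qed.
Lemma ground_loc_shape i n P g : peer_ok i n P -> ground (locp P) g ->
  gr_map g = false /\ (forall a, In a (gr_neg g) -> g_id a = i) /\
  (forall a, gr_head g = Some a -> g_id a = i /\ forall c, In c (g_args a) -> HU (locp P) c).
Proof.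
  intros Hok [[a [Ha ->]]|[r [s [Hr [HHU ->]]]]].
  - simpl. split; [reflexivity|]. split; [intros ? []|]. intros b Hb. injection Hb as <-.
    destruct Hok as [HD _]. rewrite Forall_forall in HD. split; [apply HD; exact Ha|].
    intros c Hc. left. apply in_flat_map. exists a. auto.
  - destruct (loc_rule_info i n P r Hok Hr) as [B [HB [Hs [Hin Hform]]]].
    destruct (Hin s) as [Hp [Hn Hm]]. split; [exact Hm|]. split.
    + intros a Ha. rewrite Hn in Ha. exact (neg_ids i s B a HB Ha).
    + destruct Hform as [[h [-> Hh]]| ->]; simpl; [|discriminate].
      intros a Ha. injection Ha as <-. split; [exact Hh|].
      apply (inst_args_HU (locp P) (RStd h B)); auto.
      * intros x Hx; simpl; apply in_app_iff; left; exact Hx.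
      * intros x Hx; simpl; apply in_app_iff; left; exact Hx.
Qed.

Lemma Mi_atoms i n P a : peer_ok i n P -> locally_consistent_peer P -> Mi P a ->
  g_id a = i /\ forall c, In c (g_args a) -> HU (locp P) c.
Proof.
  intros Hok Hlc Ha.
  assert (Hn : forall g, gl_reduct (ground (locp P)) (Mi P) g -> gr_neg g = []).
  { intros g0 [g [_ [_ ->]]]. reflexivity. }
  destruct (MM_support _ _ Hn (Mi_SM P Hlc) a Ha) as [g' [[g [Hg [_ ->]]] Hh]].
  destruct (ground_loc_shape i n P g Hok Hg) as [_ [_ H]]. apply H. exact Hh.
Qed.

Definition Mall (PS : p2p) : interp := fun a => exists k P, nth_error PS k = Some P /\ Mi P a.

Lemma Mall_at PS k P a : p2p_system PS -> locally_consistent PS -> nth_error PS k = Some P ->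
  Mall PS a -> g_id a = S k -> Mi P a.
Proof.
  intros [Hsys _] Hlc Hk [k' [P' [Hk' Ha]]] Hid.
  destruct (Mi_atoms _ _ P' a (Hsys k' P' Hk') (Hlc P' (nth_error_In _ _ Hk')) Ha) as [Hid' _].
  rewrite Hid in Hid'. injection Hid' as ->. rewrite Hk in Hk'. injection Hk' as ->. exact Ha.
Qed.
Definition Pst (PS : p2p) (M : interp) : gprogram := St (ps_reduct (ground (prog_of PS)) M).

Lemma Pst_neg PS M g : Pst PS M g -> gr_neg g = [].
Proof. intros [g0 [[g1 [_ [_ [_ ->]]]] ->]]. reflexivity. Qed.

Lemma Mall_model PS : p2p_system PS -> locally_consistent PS -> is_model (Pst PS (Mall PS)) (Mall PS).
Proof.
  intros Hsys Hlc g' [g0 [[g [Hg [Hneg [Hmap ->]]]] ->]] Hb.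
  unfold body_true in Hb; cbn [drop_neg gr_pos gr_neg gr_bi gr_head] in Hb |- *.
  destruct Hb as [Hpos [_ Hbi]].
  destruct Hg as [[a [Ha ->]]|[r [s [Hr [HHU ->]]]]].
  - simpl. simpl in Ha. apply in_flat_map in Ha as [P [HP Ha]].
    destruct (In_nth_error _ _ HP) as [k Hk].
    destruct (Mi_SM P (Hlc P HP)) as [Hm _].
    exists k, P. split; [exact Hk|].
    refine (Hm (drop_neg (mkGRule (Some a) [] [] true false)) _ _).
    + exists (mkGRule (Some a) [] [] true false). split; [|split; [constructor|reflexivity]].
      left. exists a. auto.
    + split; [constructor|split; [constructor|reflexivity]].
  - simpl in Hr. apply in_flat_map in Hr as [P [HP Hr]].
    destruct (In_nth_error _ _ HP) as [k Hk].
    destruct Hsys as [Hok Hrest]. pose proof (Hok k P Hk) as HokP.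
    assert (Hsys : p2p_system PS) by (split; assumption).
    apply in_app_iff in Hr as [Hr|Hr]; [|apply in_app_iff in Hr as [Hr|Hr]].
    2: { destruct HokP as [_ [_ [HMP _]]]. rewrite Forall_forall in HMP.
         destruct (HMP r Hr) as [k0 [h [j [body [phi [-> _]]]]]].
         simpl in Hmap |- *. apply Hmap. reflexivity. }
    all: assert (Hr' : In r (pLP P ++ pIC P)) by (apply in_app_iff; auto).
    all: destruct (loc_rule_info _ _ P r HokP Hr') as [B [HB [Hs [Hin Hform]]]].
    all: destruct (Hin s) as [Hp [Hn Hm]].
    all: assert (HposMi : forall b, In b (gr_pos (inst_rule s r)) -> Mi P b)
           by (intros b Hb'; apply (Mall_at PS k P b Hsys Hlc Hk);
               [rewrite Forall_forall in Hpos; apply Hpos; exact Hb'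
               |rewrite Hp in Hb'; exact (pos_ids _ s B b HB Hb')]).
    all: assert (HHUl : forall x, In x (vars_rule r) -> HU (locp P) (s x))
           by (intros x Hx; destruct (pos_vars_atom B x (Hs x Hx)) as [a0 [Ha0 Hx0]];
               assert (Hin0 : In (inst_atom s a0) (gr_pos (inst_rule s r)))
                 by (rewrite Hp; apply in_map; exact Ha0);
               destruct (Mi_atoms _ _ P _ HokP (Hlc P HP) (HposMi _ Hin0)) as [_ HH];
               apply HH; apply var_in_args; exact Hx0).
    all: destruct (Mi_SM P (Hlc P HP)) as [HmM _].
    all: assert (Hsat := HmM (drop_neg (inst_rule s r))).
    all: assert (Hred : gl_reduct (ground (locp P)) (Mi P) (drop_neg (inst_rule s r)))
           by (exists (inst_rule s r); split; [right; exists r, s; auto|split; [|reflexivity]];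
               rewrite Forall_forall in Hneg |- *; intros b Hb' Hb2; apply (Hneg b Hb');
               exists k, P; auto).
    all: assert (Hbt : body_true (Mi P) (drop_neg (inst_rule s r)))
           by (split; [rewrite Forall_forall; exact HposMi|split; [constructor|exact Hbi]]).
    all: specialize (Hsat Hred Hbt); cbn [drop_neg gr_head] in Hsat.
    all: destruct (gr_head (inst_rule s r)); [exists k, P; auto|exact Hsat].
Qed.
Lemma Mall_least PS : p2p_system PS -> locally_consistent PS ->
  forall N, is_model (Pst PS (Mall PS)) N -> subseteq (Mall PS) N.
Proof.
  intros Hsys Hlc N HN a [k [P [Hk Ha]]].
  pose proof (proj1 Hsys k P Hk) as HokP.
  pose proof (nth_error_In _ _ Hk) as HP.
  destruct (Mi_SM P (Hlc P HP)) as [Hmod Hmin].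
  set (N2 := fun b => Mi P b /\ N b).
  assert (HN2 : is_model (gl_reduct (ground (locp P)) (Mi P)) N2).
  { intros g' [g [Hg [Hneg ->]]] Hb.
    destruct (ground_loc_shape _ _ P g HokP Hg) as [Hm [Hni _]].
    assert (HP' : Pst PS (Mall PS) (drop_neg g)).
    { exists (drop_neg g). split.
      - exists g. split; [|split; [|split]].
        + destruct (locp_incl PS P HP). eapply ground_mono; eauto.
        + rewrite Forall_forall in Hneg |- *. intros b Hb' Hb2. apply (Hneg b Hb').
          apply (Mall_at PS k P b Hsys Hlc Hk Hb2). apply Hni; exact Hb'.
        + rewrite Hm; discriminate.
        + reflexivity.
      - unfold drop_neg; simpl; rewrite Hm; reflexivity. }
    pose proof (HN _ HP' (body_mono N2 N (drop_neg g) (fun b H => proj2 H) eq_refl Hb)) as H1.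
    pose proof (Hmod _ (ex_intro _ g (conj Hg (conj Hneg eq_refl)))
                  (body_mono N2 (Mi P) (drop_neg g) (fun b H => proj1 H) eq_refl Hb)) as H2.
    cbn [drop_neg gr_head] in H1, H2 |- *.
    destruct (gr_head g); [split; assumption|exact H1]. }
  exact (proj2 (Hmin N2 HN2 (fun b H => proj1 H) a Ha)).
Qed.

Lemma Mall_weak PS : p2p_system PS -> locally_consistent PS -> weak_model PS (Mall PS).
Proof.
  intros Hsys Hlc.
  pose proof (Mall_model PS Hsys Hlc) as Hm.
  pose proof (Mall_least PS Hsys Hlc) as Hl.
  split.
  - split; [exact Hm|]. intros N HN _. exact (Hl N HN).
  - intros N [HN Hmin] a. split.
    + exact (Hmin (Mall PS) Hm (Hl N HN) a).
    + exact (Hl N HN a).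
Qed.
Fixpoint all_lists (U : list nat) (n : nat) : list (list nat) :=
  match n with 0 => [[]] | S n => flat_map (fun c => map (cons c) (all_lists U n)) U end.

Lemma all_lists_spec U l : (forall c, In c l -> In c U) -> In l (all_lists U (length l)).
Proof.
  induction l as [|a l IH]; simpl; intros H; [left; reflexivity|].
  apply in_flat_map. exists a. split; [apply H; left; reflexivity|].
  apply in_map. apply IH. intros; apply H; right; assumption.
Qed.

Definition Ulist (P : program) := flat_map g_args (facts P) ++ flat_map consts_rule (rules P).
Definition head_of (r : rule) : option atom :=
  match r with RStd h _ => Some h | RIC _ => None | RMap _ h _ _ _ => Some h end.
Definition Llist (P : program) : list gatom :=
  facts P ++ flat_map (fun r => match head_of r with
     | Some h => map (mkGAtom (a_id h) (a_pred h)) (all_lists (Ulist P) (length (a_args h)))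
     | None => [] end) (rules P).

Lemma ground_head_L P g a : ground P g -> gr_head g = Some a -> In a (Llist P).
Proof.
  intros [[a0 [Ha ->]]|[r [s [Hr [HHU ->]]]]] Hh.
  - simpl in Hh. injection Hh as <-. apply in_app_iff; left; exact Ha.
  - apply in_app_iff; right. apply in_flat_map. exists r. split; [exact Hr|].
    destruct r as [h B|B|k h j body phi]; simpl in Hh; try discriminate;
    injection Hh as <-; simpl; apply in_map_iff;
    exists (map (inst_term s) (a_args h)); (split; [reflexivity|]);
    rewrite <- (length_map (inst_term s)); apply all_lists_spec;
    intros c Hc; apply in_app_iff;
    (assert (HU P c) as [H|H]; [|left; exact H|right; exact H]);
    (apply (inst_args_HU P _ s h Hr HHU);
      [intros x Hx; simpl; apply in_app_iff; left; exact Hx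
      |intros x Hx; simpl; apply in_app_iff; left; exact Hx
      |exact Hc]).
Qed.

Lemma weak_in_L PS M a : weak_model PS M -> M a -> In a (Llist (prog_of PS)).
Proof.
  intros [HM _] Ha.
  destruct (MM_support _ _ (Pst_neg PS M) HM a Ha) as [g' [[g0 [[g [Hg [_ [_ ->]]]] ->]] Hh]].
  apply (ground_head_L _ g a Hg). exact Hh.
Qed.

Definition cnt (L : list gatom) (R : gatom -> Prop) : nat :=
  fold_right (fun a acc => (if excluded_middle_informative (R a) then 1 else 0) + acc) 0 L.

Lemma cnt_le_len L R : cnt L R <= length L.
Proof. induction L; simpl; [lia|]. destruct excluded_middle_informative; lia. Qed.

Lemma cnt_mono L (R1 R2 : gatom -> Prop) : (forall a, R1 a -> R2 a) -> cnt L R1 <= cnt L R2.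
Proof.
  intros H. induction L; simpl; [lia|].
  destruct (excluded_middle_informative (R1 a)), (excluded_middle_informative (R2 a)); try lia.
  exfalso; auto.
Qed.

Lemma cnt_strict L (R1 R2 : gatom -> Prop) a : (forall a, R1 a -> R2 a) -> In a L -> R2 a -> ~ R1 a ->
  cnt L R1 < cnt L R2.
Proof.
  intros H Hin H2 H1. induction L as [|b L IH]; simpl in *; [contradiction|].
  destruct Hin as [->|Hin].
  - pose proof (cnt_mono L R1 R2 H).
    destruct (excluded_middle_informative (R1 a)), (excluded_middle_informative (R2 a)); try lia;
    contradiction.
  - specialize (IH Hin).
    destruct (excluded_middle_informative (R1 b)), (excluded_middle_informative (R2 b)); try lia.
    exfalso; auto.
Qed.

Theorem theorem1 (PS : p2p) :
  p2p_system PS -> maximal_p2p PS -> locally_consistent PS ->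
  exists M : interp, max_weak_model PS M.
Proof.
  intros Hsys _ Hlc.
  set (L := Llist (prog_of PS)).
  assert (Hind : forall n M, length L - cnt L (restrict_MP PS M) <= n -> weak_model PS M ->
            exists M', max_weak_model PS M').
  { induction n as [|n IH]; intros M Hn HM;
    (destruct (classic (exists N, weak_model PS N /\ gtMax PS N M)) as [[N [HN [Hge Hnge]]] | Hno];
     [|exists M; split; assumption]);
    (assert (exists a, restrict_MP PS N a /\ ~ restrict_MP PS M a) as [a [HaN HaM]]
       by (apply NNPP; intro Hc; apply Hnge; intros a Ha; apply NNPP; intro Hb;
           apply Hc; exists a; split; assumption));
    pose proof (cnt_strict L _ _ a Hge (weak_in_L PS N a HN (proj1 HaN)) HaN HaM);
    pose proof (cnt_le_len L (restrict_MP PS N)).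
    - lia.
    - apply (IH N); [lia|exact HN]. }
  exact (Hind _ _ (le_n _) (Mall_weak PS Hsys Hlc)).
Qed.
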